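(* Let $\mathbb{G}$ be an $E$-group such that $\mathbb{G}$ is compatible with the Cayley graph $\mathrm{Cay}(\mathbb{G}[\alpha])$ for every $\alpha\subsetneq E$. Then $\mathbb{G}$ is $3$-acyclic.
   Context: Let $E$ be a finite set. An $E$-group is a group $\mathbb{G}$ together with an inclusion $E\subseteq\mathbb{G}$ such that $E$ generates $\mathbb{G}$ and every $e\in E$ satisfies $e\neq1$, $e^2=1$. For $w=e_1\cdots e_n\in E^*$, $[w]_{\mathbb{G}}=e_1\cdots e_n$. For $\alpha\subseteq E$, $\mathbb{G}[\alpha]$ is the subgroup generated by $\alpha$. An $E$-graph is $\mathbb{H}=(V,(R_e)_{e\in E})$ with each $R_e\subseteq V\times V$ symmetric and every vertex having at most one $R_e$-neighbour. For $e\in E$, $\pi_e$ is the permutation of $V$ swapping each vertex with its $R_e$-neighbour if it has one and fixing it otherwise; for $w=e_1\cdots e_n$, $\pi_w=\pi_{e_n}\circ\cdots\circ\pi_{e_1}$. $\mathbb{G}$ is compatible with $\mathbb{H}$ if $[w]_{\mathbb{G}}=1$ implies $\pi_w=\mathrm{id}_V$ for all $w\in E^*$. $\mathrm{Cay}(\mathbb{G}[\alpha])$ is the $E$-graph on vertex set $\mathbb{G}[\alpha]$ with $R_e=\{(g,ge):g\in\mathbb{G}[\alpha]\}$ for $e\in\alpha$ and $R_e=\emptyset$ for $e\notin\alpha$. A coset cycle of length $n\ge2$ in $\mathbb{G}$ is a cyclically indexed family $(g_i,\alpha_i)_{i\in\mathbb{Z}_n}$ with $g_i\in\mathbb{G}$,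 $\alpha_i\subseteq E$, such that for all $i$: $g_{i+1}\in g_i\mathbb{G}[\alpha_i]$ and $g_i\mathbb{G}[\alpha_i\cap\alpha_{i-1}]\cap g_{i+1}\mathbb{G}[\alpha_i\cap\alpha_{i+1}]=\emptyset$. $\mathbb{G}$ is $N$-acyclic if it admits no coset cycle of length $n$ with $2\le n\le N$. *)

(* Defs.v *)
From mathcomp Require Import all_boot.
Set Implicit Arguments. Unset Strict Implicit. Unset Printing Implicit Defensive.

Record Grp := {
  carrier :> Type;
  gmul : carrier -> carrier -> carrier;
  gone : carrier;
  ginv : carrier -> carrier;
  gmulA : forall x y z, gmul x (gmul y z) = gmul (gmul x y) z;
  gmul1l : forall x, gmul gone x = x;
  gmulVl : forall x, gmul (ginv x) x = gone
}.

Definition word_eval (E : finType) (G : Grp) (iota : E -> G) (w : seq E) : G :=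
  foldr (fun e x => gmul (iota e) x) (gone G) w.

Definition is_Egroup (E : finType) (G : Grp) (iota : E -> G) : Prop :=
  injective iota /\
  (forall g : G, exists w : seq E, word_eval iota w = g) /\
  (forall e : E, iota e <> gone G /\ gmul (iota e) (iota e) = gone G).

(* Membership in the subgroup G[alpha] generated by alpha (the generators are
   involutions, so this is the set of values of words over alpha). *)
Definition in_gen (E : finType) (G : Grp) (iota : E -> G) (alpha : {set E}) (g : G) : Prop :=
  exists w : seq E, all (fun e => e \in alpha) w /\ word_eval iota w = g.

Definition in_coset (E : finType) (G : Grp) (iota : E -> G) (g : G) (alpha : {set E}) (x : G) : Prop :=
  exists h : G, in_gen iota alpha h /\ x = gmul g h.

Record EGraph (E : Type) := { vert : Type; edge : E -> vert -> vert -> Prop }.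
Arguments vert {E} _.
Arguments edge {E} _ _ _ _.


(* pi_e as a relation: v' is the R_e-neighbour of v, or v has none and v' = v.
   For an E-graph (R_e symmetric, at most one neighbour) this is the graph of the
   permutation pi_e. *)
Definition pi_e {E : Type} (H : EGraph E) (e : E) (v v' : vert H) : Prop :=
  edge H e v v' \/ ((~ exists u, edge H e v u) /\ v' = v).

(* pi_w = pi_{e_n} o ... o pi_{e_1} (e_1 is applied first), as a relation. *)
Fixpoint pi_w (E : Type) (H : EGraph E) (w : seq E) (v v' : vert H) : Prop :=
  match w with
  | [::] => v' = v
  | e :: w' => exists u, @pi_e E H e v u /\ @pi_w E H w' u v'
  end.
Arguments pi_w {E} H w v v'.

Definition compatible (E : finType) (G : Grp) (iota : E -> G) (H : EGraph E) : Prop :=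
  forall w : seq E, word_eval iota w = gone G ->
    forall v v' : vert H, pi_w H w v v' -> v' = v.

Definition Cay (E : finType) (G : Grp) (iota : E -> G) (alpha : {set E}) : EGraph E :=
  {| vert := { g : G | in_gen iota alpha g };
     edge := fun e x y => e \in alpha /\ proj1_sig y = gmul (proj1_sig x) (iota e) |}.

(* A coset cycle of length n >= 2, indexed by 'I_n (= Z_n, with successor ordS
   and predecessor ord_pred). *)
Definition coset_cycle (E : finType) (G : Grp) (iota : E -> G) (n : nat)
    (g : 'I_n -> G) (a : 'I_n -> {set E}) : Prop :=
  2 <= n /\
  forall i : 'I_n,
    in_coset iota (g i) (a i) (g (ordS i)) /\
    ~ (exists x : G,
         in_coset iota (g i) (a i :&: a (ord_pred i)) x /\
         in_coset iota (g (ordS i)) (a i :&: a (ordS i)) x).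

Definition acyclic (E : finType) (G : Grp) (iota : E -> G) (N : nat) : Prop :=
  forall n : nat, 2 <= n -> n <= N ->
    forall (g : 'I_n -> G) (a : 'I_n -> {set E}), ~ coset_cycle iota g a.

(* Main.v *)
Require Import Defs.
From mathcomp Require Import all_boot.
Set Implicit Arguments. Unset Strict Implicit. Unset Printing Implicit Defensive.

Lemma gmulV (G : Grp) (x : G) : gmul x (ginv x) = gone G.
Proof.
have H : forall y : G, gmul (ginv (ginv y)) (ginv y) = gone G := fun y => gmulVl (ginv y).
rewrite -(gmul1l (gmul x (ginv x))) -{1}(H x) -gmulA (gmulA (ginv x)) gmulVl gmul1l.
exact: H.
Qed.

Lemma gmul1r (G : Grp) (x : G) : gmul x (gone G) = x.
Proof. by rewrite -(gmulVl x) gmulA gmulV gmul1l. Qed.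

Lemma inv_uniq_l (G : Grp) (x y : G) : gmul x y = gone G -> x = ginv y.
Proof. by move=> H; rewrite -(gmul1r x) -(gmulV y) gmulA H gmul1l. Qed.

Lemma inv_uniq_r (G : Grp) (x y : G) : gmul x y = gone G -> y = ginv x.
Proof. by move=> H; rewrite -(gmul1l y) -(gmulVl x) -gmulA H gmul1r. Qed.

Lemma mul_cancel_l (G : Grp) (x y z : G) : gmul x y = gmul x z -> y = z.
Proof.
by move=> H; rewrite -(gmul1l y) -(gmulVl x) -gmulA H gmulA gmulVl gmul1l.
Qed.

Lemma eval_cat (E : finType) (G : Grp) (iota : E -> G) (u v : seq E) :
  word_eval iota (u ++ v) = gmul (word_eval iota u) (word_eval iota v).
Proof.
elim: u => [|e u IH] /=; first by rewrite gmul1l.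
by rewrite /word_eval /= -/(word_eval iota (u ++ v)) IH gmulA.
Qed.

Lemma eval_cons (E : finType) (G : Grp) (iota : E -> G) e (u : seq E) :
  word_eval iota (e :: u) = gmul (iota e) (word_eval iota u).
Proof. by []. Qed.

Lemma eval_rev (E : finType) (G : Grp) (iota : E -> G) (u : seq E) :
  is_Egroup iota -> word_eval iota (rev u) = ginv (word_eval iota u).
Proof.
move=> [_ [_ Hinv]]; apply: inv_uniq_r.
elim: u => [|e u IH]; first by rewrite /= gmul1l.
rewrite rev_cons -cats1 eval_cat eval_cons -gmulA (gmulA (word_eval iota u)) IH gmul1l.
by rewrite eval_cons gmul1r (proj2 (Hinv e)).
Qed.

Lemma in_gen_mul (E : finType) (G : Grp) (iota : E -> G) a (x y : G) :
  in_gen iota a x -> in_gen iota a y -> in_gen iota a (gmul x y).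
Proof.
move=> [u [Hu <-]] [v [Hv <-]]; exists (u ++ v).
by rewrite all_cat Hu Hv eval_cat.
Qed.

Lemma in_gen_inv (E : finType) (G : Grp) (iota : E -> G) a (x : G) :
  is_Egroup iota -> in_gen iota a x -> in_gen iota a (ginv x).
Proof.
move=> HE [u [Hu <-]]; exists (rev u).
by rewrite all_rev Hu eval_rev.
Qed.

Lemma in_gen1 (E : finType) (G : Grp) (iota : E -> G) a :
  in_gen iota a (gone G).
Proof. by exists [::]. Qed.

Lemma in_gen_filter (E : finType) (G : Grp) (iota : E -> G) (a b : {set E}) (u : seq E) :
  all (fun e => e \in b) u -> in_gen iota (a :&: b) (word_eval iota [seq e <- u | e \in a]).
Proof.
move=> Hu; exists [seq e <- u | e \in a]; split => //.
elim: u Hu => [|e u IH] //= /andP [Hb Hu].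
case: ifP => Ha //=; rewrite IH //; by rewrite in_setI Ha Hb.
Qed.

Lemma pi_w_Cay (E : finType) (G : Grp) (iota : E -> G) (alpha : {set E}) (w : seq E) :
  forall v : vert (Cay iota alpha),
  exists v', pi_w (Cay iota alpha) w v v' /\
    proj1_sig v' = gmul (proj1_sig v) (word_eval iota [seq e <- w | e \in alpha]).
Proof.
elim: w => [|e w IH] v.
  by exists v; split => //=; rewrite gmul1r.
rewrite /=; case: ifP => he.
- have pu : in_gen iota alpha (gmul (proj1_sig v) (iota e)).
    apply: in_gen_mul; first exact: (proj2_sig v).
    by exists [:: e]; rewrite /= he gmul1r.
  have [v' [Hp Hv']] := IH (exist _ _ pu).
  exists v'; split.
    by exists (exist _ _ pu); split => //; left.
  by rewrite Hv' /= -gmulA.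
- have [v' [Hp Hv']] := IH v.
  exists v'; split => //.
  exists v; split => //; right; split => //.
  by case=> u [] /=; rewrite he.
Qed.

Lemma proj_word (E : finType) (G : Grp) (iota : E -> G) (alpha : {set E}) (w : seq E) :
  alpha \proper [set: E] -> compatible iota (Cay iota alpha) ->
  word_eval iota w = gone G -> word_eval iota [seq e <- w | e \in alpha] = gone G.
Proof.
move=> _ Hc Hw.
have [v' [Hp Hv']] := pi_w_Cay w (exist _ (gone G) (in_gen1 iota alpha)).
have := Hc w Hw _ _ Hp => Heq.
by rewrite Heq /= gmul1l in Hv'.
Qed.

Lemma key (E : finType) (G : Grp) (iota : E -> G) (g0 g1 g2 : G) (a0 a1 a2 : {set E}) :
  is_Egroup iota ->
  (forall alpha : {set E}, alpha \proper [set: E] -> compatible iota (Cay iota alpha)) ->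
  in_coset iota g0 a0 g1 -> in_coset iota g1 a1 g2 -> in_coset iota g2 a2 g0 ->
  exists x, in_coset iota g0 (a0 :&: a2) x /\ in_coset iota g1 (a0 :&: a1) x.
Proof.
move=> HE Hc [h0 [[u0 [Hu0 Eu0]] E1]] [h1 [[u1 [Hu1 Eu1]] E2]] [h2 [[u2 [Hu2 Eu2]] E0]].
have Hprod : gmul h0 (gmul h1 h2) = gone G.
  apply: (@mul_cancel_l _ g0); rewrite gmul1r !gmulA -E1 -E2 -E0 //.
have [Ha0|Ha0] := boolP (a0 \proper [set: E]).
- set p := word_eval iota [seq e <- u1 | e \in a0].
  set q := word_eval iota [seq e <- u2 | e \in a0].
  have Hw : word_eval iota (u0 ++ u1 ++ u2) = gone G by rewrite !eval_cat Eu0 Eu1 Eu2.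
  have := proj_word Ha0 (Hc _ Ha0) Hw.
  rewrite !filter_cat (all_filterP Hu0) !eval_cat Eu0 -/p -/q gmulA => Hpq.
  exists (gmul g1 p); split.
  + exists (ginv q); split.
      by apply: in_gen_inv => //; apply: in_gen_filter.
    by rewrite E1 -gmulA (inv_uniq_l Hpq).
  + by exists p; split => //; apply: in_gen_filter.
- have Ha0T : a0 = [set: E] by apply/eqP; apply/negPn; rewrite -properT.
  exists g2; split.
  + exists (ginv h2); split.
      by rewrite Ha0T setTI; apply: in_gen_inv => //; exists u2.
    by rewrite E0 -gmulA gmulV gmul1r.
  + by exists h1; split => //; rewrite Ha0T setTI; exists u1.
Qed.

Theorem mainTheorem6 (E : finType) (G : Grp) (iota : E -> G) :
  is_Egroup iota ->
  (forall alpha : {set E}, alpha \proper [set: E] -> compatible iota (Cay iota alpha)) ->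
  acyclic iota 3.
Proof.
move=> HE Hc n hn2 hn3 g a [_ Hcyc].
case: n hn2 hn3 g a Hcyc => [|[|[|[|n]]]] // _ _ g a Hcyc.
- pose i0 := @Ordinal 2 0 isT; pose i1 := @Ordinal 2 1 isT.
  have [C0 N0] := Hcyc i0; have [C1 _] := Hcyc i1.
  have e01 : ordS i0 = i1 by apply: val_inj.
  have e10 : ordS i1 = i0 by apply: val_inj.
  have p01 : ord_pred i0 = i1 by apply: val_inj.
  rewrite e01 in C0 N0; rewrite p01 in N0; rewrite e10 in C1.
  apply: N0; apply: (key HE Hc C0 C1).
  by exists (gone G); split; [apply: in_gen1 | rewrite gmul1r].
- pose i0 := @Ordinal 3 0 isT; pose i1 := @Ordinal 3 1 isT; pose i2 := @Ordinal 3 2 isT.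
  have [C0 N0] := Hcyc i0; have [C1 _] := Hcyc i1; have [C2 _] := Hcyc i2.
  have e01 : ordS i0 = i1 by apply: val_inj.
  have e12 : ordS i1 = i2 by apply: val_inj.
  have e20 : ordS i2 = i0 by apply: val_inj.
  have p02 : ord_pred i0 = i2 by apply: val_inj.
  rewrite e01 in C0 N0; rewrite p02 in N0; rewrite e12 in C1; rewrite e20 in C2.
  apply: N0; exact: (key HE Hc C0 C1 C2).
Qed.
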